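(* Let $X$ be a finite set. (1) Let $L$ be a finite set and $\Phi : X \rightrightarrows L$ a labeling correspondence. Then the classifier $f:2^X\to 2^X$ associated with $\Phi$ is a closure operator on $X$. (2) Let $f:2^X\to 2^X$ be a closure operator on $X$. Then there exist a finite set of labels $L$ and a labeling correspondence $\Phi: X\rightrightarrows L$ such that the classifier associated with $\Phi$ is $f$. Moreover, one such choice is $L=S(f)$ and $\Phi(x)=\{s \mid s\in S(f),\ x\in s\}$ for $x\in X$.
   Context: A closure operator on $X$ is a map $f:2^X\to 2^X$ such that (extensivity) $A\subseteq f(A)$ for all $A$ and $f(\emptyset)=\emptyset$; (idempotence) $f(f(A))=f(A)$; (monotonicity) $A\subseteq B$ implies $f(A)\subseteq f(B)$. A set $A$ is closed for $f$ if $f(A)=A$, and $S(f)=f(2^X)$ denotes the set of closed sets. A labeling correspondence is a set-valued map $\Phi: X\rightrightarrows L$ assigning to each $x\in X$ a subset $\Phi(x)\subseteq L$. The classifier associated with $\Phi$ is the map $f:2^X\to 2^X$ given by $f(A)=\{x\in X \mid \bigcap_{y\in A}\Phi(y)\subseteq \Phi(x)\}$. *)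

(* Defs.v *)
From mathcomp Require Import all_boot.
Set Implicit Arguments. Unset Strict Implicit. Unset Printing Implicit Defensive.

Section Defs.
Variable X : finType.

Definition closure_operator (f : {set X} -> {set X}) : Prop :=
  [/\ (forall A : {set X}, A \subset f A), f set0 = set0,
      (forall A : {set X}, f (f A) = f A) &
      (forall A B : {set X}, A \subset B -> f A \subset f B)].

Definition closed_sets (f : {set X} -> {set X}) : {set {set X}} :=
  [set f A | A in [set: {set X}]].

Definition classifier (L : finType) (Phi : X -> {set L}) (A : {set X}) : {set X} :=
  if A == set0 then set0
  else [set x | \bigcap_(y in A) Phi y \subset Phi x].

Definition closed_label (f : {set X} -> {set X}) : finType :=
  {s : {set X} | s \in closed_sets f}.

Definition canonical_labeling (f : {set X} -> {set X}) (x : X)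
  : {set closed_label f} :=
  [set s : closed_label f | x \in val s].

End Defs.

(* Main.v *)
Require Import Defs.
From mathcomp Require Import all_boot.

Section P.
Variable X : finType.

Lemma part1 (L : finType) (Phi : X -> {set L}) : closure_operator (classifier Phi).
Proof.
have ext : forall A : {set X}, A \subset classifier Phi A.
  move=> A; rewrite /classifier; case: eqP => [->|_]; first by rewrite sub0set.
  apply/subsetP => x xA; rewrite inE; exact: bigcap_inf.
have mono : forall A B : {set X}, A \subset B -> classifier Phi A \subset classifier Phi B.
  move=> A B AB; rewrite /classifier; case: eqP => [_|/eqP A0]; first by rewrite sub0set.
  have B0 : B != set0.
    apply: contraNneq A0 => B0; apply/eqP; apply/eqP; rewrite -subset0 -B0 //.
  rewrite (negbTE B0); apply/subsetP => x; rewrite !inE => H.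
  apply: subset_trans H; apply/bigcapsP => y yA; apply: bigcap_inf; exact: (subsetP AB).
split => //; first by rewrite /classifier eqxx.
move=> A; apply/eqP; rewrite eqEsubset ext andbT.
rewrite {1}/classifier; case: ifP => [_|/negbT fA0]; first by rewrite sub0set.
have A0 : A != set0.
  by apply: contraNneq fA0 => ->; rewrite /classifier eqxx.
rewrite {2}/classifier (negbTE A0); apply/subsetP => x; rewrite !inE => H.
apply: subset_trans H; apply/bigcapsP => y yfA.
move: yfA; rewrite /classifier (negbTE A0) inE => Hy.
apply: subset_trans Hy; apply/bigcapsP => z zA; apply: bigcap_inf.
by move: (subsetP (ext A) z zA); rewrite /classifier (negbTE A0).
Qed.

Lemma part2 (f : {set X} -> {set X}) : closure_operator f ->
  forall A : {set X}, classifier (canonical_labeling f) A = f A.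
Proof.
case=> ext f0 idem mono A; rewrite /classifier.
case: eqP => [->|/eqP A0]; first by rewrite f0.
have fAc : f A \in closed_sets f by apply/imsetP; exists A; rewrite ?inE.
apply/setP => x; rewrite inE; apply/idP/idP.
- move=> H.
  have : (Sub (f A) fAc : closed_label f) \in canonical_labeling f x.
    apply: (subsetP H); apply/bigcapP => y yA; rewrite inE /=.
    exact: (subsetP (ext A)).
  by rewrite inE.
- move=> xfA; apply/subsetP => s /bigcapP Hs; rewrite inE.
  have As : A \subset val s.
    by apply/subsetP => y yA; have := Hs y yA; rewrite inE.
  have : f (val s) = val s.
    by case: s {Hs As} => s /= /imsetP [B _ ->]; rewrite idem.
  move=> fs; rewrite -fs; exact: (subsetP (mono _ _ As)).
Qed.
End P.

Theorem proposition1 (X : finType) :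
  (forall (L : finType) (Phi : X -> {set L}), closure_operator (classifier Phi))
  /\
  (forall f : {set X} -> {set X}, closure_operator f ->
     (exists (L : finType) (Phi : X -> {set L}),
        forall A : {set X}, classifier Phi A = f A)
     /\ (forall A : {set X}, classifier (canonical_labeling f) A = f A)).
Proof.
split; first exact: part1.
move=> f cf; split; last exact: part2.
by exists (closed_label f), (canonical_labeling f); apply: part2.
Qed.
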